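(* Let $G$ be a 2-connected graph. Then for every positive integer $k$ there is a protocol solving the multiparty equality problem on $G$ with $k$-bit inputs in the local broadcast model, in which only the vertices of a fixed minimum total vertex cover of $G$ send messages, and whose total cost is at most $\left(\tfrac{k}{2}+o(k)\right)\mathsf{tvc}(G)$, where $o(k)$ is taken as $k\to\infty$ with $G$ fixed. In particular $\mathrm{opt}(G)\le \tfrac12\,\mathsf{tvc}(G)$.
   Context: Multiparty equality in the local broadcast model: $G$ is a connected graph and $k$ a positive integer; every vertex $v$ receives an input $\lambda(v)\in\{0,1\}^k$. Vertices communicate (possibly over several rounds) by broadcasting messages; a message broadcast by a vertex is received by all of its neighbours, and its number of bits is counted once. Protocols are deterministic and static: which vertices send messages, and the lengths of the messages, depend only on $G$ and $k$, while the contents of messages may depend on the inputs (and on previously received messages). At the end, every vertex accepts or rejects. The protocol solves the problem if, whenever all inputs are equal, every vertex accepts, and whenever two inputs differ, at least one vertex rejects. The total cost of a protocol is the sum over all vertices of the number of bits they broadcast. $\mathrm{opt}(G,k)$ is the minimum total cost of a protocol solving the problem, and $\mathrm{opt}(G)=\lim_{k\to\infty}\mathrm{opt}(G,k)/k$ (this limit exists). A total vertex cover of $G$ is a set $S\subseteq V(G)$ that is a vertex cover (every edge has an endpoint in $S$) and a total dominating set (every vertex of $G$, including those in $S$, has a neighbour in $S$); $\mathsf{tvc}(G)$ is the minimum size of a total vertex cover. *)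

(* Defs.v *)
From HB Require Import structures.
From mathcomp Require Import all_boot all_order all_algebra.
Set Implicit Arguments. Unset Strict Implicit. Unset Printing Implicit Defensive.
Import Order.TTheory GRing.Theory Num.Theory.

Definition simple_graph (V : finType) (e : rel V) : Prop :=
  symmetric e /\ irreflexive e.

Definition graph_connected (V : finType) (e : rel V) : Prop :=
  forall u v : V, connect e u v.

Definition del_vertex (V : finType) (e : rel V) (x : V) : rel V :=
  [rel a b | [&& e a b, a != x & b != x]].

Definition two_connected (V : finType) (e : rel V) : Prop :=
  [/\ 2 < #|V|, graph_connected e &
      forall x u v : V, u != x -> v != x -> connect (del_vertex e x) u v].

Definition is_vertex_cover (V : finType) (e : rel V) (S : {set V}) : Prop :=
  forall u v, e u v -> (u \in S) || (v \in S).

Definition is_total_dominating (V : finType) (e : rel V) (S : {set V}) : Prop :=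
  forall v, exists2 u, u \in S & e v u.

Definition is_tvc (V : finType) (e : rel V) (S : {set V}) : Prop :=
  is_vertex_cover e S /\ is_total_dominating e S.

(* S is a minimum total vertex cover; then tvc(G) = #|S|. *)
Definition min_tvc (V : finType) (e : rel V) (S : {set V}) : Prop :=
  is_tvc e S /\ forall S' : {set V}, is_tvc e S' -> #|S| <= #|S'|.

(* A (deterministic, static) protocol for k-bit inputs on vertex set V:
   - [rounds] rounds, numbered 0 .. rounds-1;
   - [len t v] : number of bits broadcast by v in round t (depends only on
     the protocol, i.e. on G and k, not on the inputs);
   - [msg t v x h] : the content broadcast by v in round t, given its input x
     and its view h (h s u = message received from u in round s);
   - [decide v x h] : acceptance bit of v at the end.
   Views are functions nat -> V -> bitseq; the execution below masks them so
   that v only sees messages of neighbours from earlier rounds. *)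
Record protocol (V : finType) (k : nat) := Protocol {
  rounds : nat;
  len : nat -> V -> nat;
  msg : nat -> V -> k.-tuple bool -> (nat -> V -> seq bool) -> seq bool;
  decide : V -> k.-tuple bool -> (nat -> V -> seq bool) -> bool
}.

Definition fix_len (n : nat) (s : seq bool) : seq bool :=
  take n s ++ nseq (n - size s) false.

Section Exec.
Variables (V : finType) (e : rel V) (k : nat) (P : protocol V k)
          (lam : V -> k.-tuple bool).

Definition view (v : V) (tr : nat -> V -> seq bool) : nat -> V -> seq bool :=
  fun s u => if e v u then tr s u else [::].

Fixpoint run (t : nat) : nat -> V -> seq bool :=
  match t with
  | 0 => fun _ _ => [::]
  | t'.+1 => fun s u =>
      if s < t' then run t' s u
      else if s == t' then
        fix_len (len P t' u) (msg P t' u (lam u) (view u (run t')))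
      else [::]
  end.

Definition accepts (v : V) : bool :=
  decide P v (lam v) (view v (run (rounds P))).

End Exec.

Definition solves (V : finType) (e : rel V) (k : nat) (P : protocol V k) : Prop :=
  forall lam : V -> k.-tuple bool,
    ((forall u v, lam u = lam v) -> forall v, accepts e P lam v) /\
    ((exists u v, lam u <> lam v) -> exists v, ~~ accepts e P lam v).

Definition cost (V : finType) (k : nat) (P : protocol V k) : nat :=
  \sum_(t < rounds P) \sum_(v : V) len P t v.

Definition senders_in (V : finType) (k : nat) (P : protocol V k) (S : {set V}) : Prop :=
  forall t v, t < rounds P -> v \notin S -> len P t v = 0.

(* Main.v *)
From Stdlib Require Import PeanoNat.
Require Import Defs.
From HB Require Import structures.
From mathcomp Require Import all_boot all_order all_algebra zify ring lra.
Set Implicit Arguments. Unset Strict Implicit. Unset Printing Implicit Defensive.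
Import Order.TTheory GRing.Theory Num.Theory.

Definition enc (w v : nat) : seq bool := mkseq (Nat.testbit v) w.

Lemma expn_pow m k : m ^ k = Nat.pow m k.
Proof. elim: k => [|k IH]; first by []. by rewrite expnS IH Nat.pow_succ_r'. Qed.

Lemma size_enc w v : size (enc w v) = w.
Proof. by rewrite size_mkseq. Qed.

Lemma testbit_big v w m : v < 2 ^ w -> w <= m -> Nat.testbit v m = false.
Proof.
move=> lt le; apply/Nat.testbit_false.
rewrite Nat.div_small //.
have : 2 ^ w <= 2 ^ m by rewrite leq_exp2l.
rewrite !expn_pow; move: lt; rewrite expn_pow; move/ssrnat.ltP => h1 /ssrnat.leP h2; lia.
Qed.

Lemma enc_inj w v1 v2 : v1 < 2 ^ w -> v2 < 2 ^ w -> enc w v1 = enc w v2 -> v1 = v2.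
Proof.
move=> l1 l2 E; apply/Nat.bits_inj_iff => m.
case: (ltnP m w) => mw.
  by have := congr1 (nth false ^~ m) E; rewrite !nth_mkseq.
by rewrite (testbit_big l1 mw) (testbit_big l2 mw).
Qed.

Section StNum.
Variables (V : finType) (e : rel V).
Hypothesis esym : symmetric e.

Definition lowerP (L : seq V) (s : V) :=
  forall x, x \in L -> x != s -> exists2 y, y \in L & e x y && (index y L < index x L).
Definition higherP (L : seq V) (t : V) :=
  forall x, x \in L -> x != t -> exists2 y, y \in L & e x y && (index x L < index y L).
Definition goodL L s t := [/\ uniq L, s \in L, t \in L, lowerP L s & higherP L t].

Lemma insert_good P Q I a b s t :
  goodL (P ++ Q) s t -> a \in P -> b \in Q -> uniq I ->
  (forall x, x \in I -> x \notin P ++ Q) ->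
  path e a (rcons I b) -> goodL (P ++ I ++ Q) s t.
Proof.
move=> [uL sL tL lo hi] aP bQ uI dI pI.
have uPQ := uL; rewrite cat_uniq in uPQ; case/and3P: uPQ => uP dPQ uQ.
have nIP x : x \in I -> x \notin P by move=> /dI; rewrite mem_cat negb_or => /andP[].
have nIQ x : x \in I -> x \notin Q by move=> /dI; rewrite mem_cat negb_or => /andP[].
have nQP x : x \in Q -> x \notin P by move=> xQ; apply/negP=> xP; move/hasP: dPQ; apply; exists x.
have iP x : x \in P -> index x (P ++ I ++ Q) = index x (P ++ Q).
  by move=> xP; rewrite !index_cat xP.
have iQ x : x \in Q -> index x (P ++ I ++ Q) = index x (P ++ Q) + size I.
  move=> xQ; rewrite !index_cat (negbTE (nQP _ xQ)).
  have -> : (x \in I) = false by apply/negP=> /nIQ; rewrite xQ.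
  by rewrite addnA [size P + _]addnC -addnA addnC.
have iI x : x \in I -> index x (P ++ I ++ Q) = size P + index x I.
  by move=> xI; rewrite index_cat (negbTE (nIP _ xI)) index_cat xI.
have ltP x : x \in P -> index x (P ++ Q) < size P.
  by move=> xP; rewrite index_cat xP index_mem.
have geQ x : x \in Q -> size P <= index x (P ++ Q).
  by move=> xQ; rewrite index_cat (negbTE (nQP _ xQ)) leq_addr.
have mL x : x \in P ++ Q -> (x \in P) || (x \in Q) by rewrite mem_cat.
have old_lt x y : x \in P ++ Q -> y \in P ++ Q ->
    index y (P ++ Q) < index x (P ++ Q) -> index y (P ++ I ++ Q) < index x (P ++ I ++ Q).
  move=> /mL /orP[xP|xQ] /mL /orP[yP|yQ] lt.
  - by rewrite !iP.
  - by move: lt; rewrite ltnNge (ltnW (leq_trans (ltP _ xP) (geQ _ yQ))).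
  - rewrite (iP _ yP) (iQ _ xQ).
    exact: leq_trans (ltP _ yP) (leq_trans (geQ _ xQ) (leq_addr _ _)).
  - by rewrite (iQ _ xQ) (iQ _ yQ) ltn_add2r.
have mem' x : x \in P ++ I ++ Q = (x \in P ++ Q) || (x \in I).
  by rewrite !mem_cat; case: (x \in P); case: (x \in I); case: (x \in Q).
have sizeRI : size (rcons I b) = (size I).+1 by rewrite size_rcons.
move/(pathP a): pI; rewrite sizeRI => pI.
have nthR j : j < size I -> nth a (rcons I b) j = nth a I j by move=> jI; rewrite nth_rcons jI.
split.
- rewrite cat_uniq uP /= cat_uniq uI uQ /= andbT; apply/andP; split.
    apply/hasPn=> x; rewrite mem_cat => /orP[xI|xQ]; first exact: nIP.
    exact: nQP.
  by apply/hasPn=> x xQ; apply/negP=> /nIQ; rewrite xQ.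
- by rewrite mem' sL.
- by rewrite mem' tL.
- move=> x; rewrite mem' => /orP[xL|xI] xs.
    have [y yL /andP[exy lt]] := lo x xL xs.
    by exists y; [rewrite mem' yL | rewrite exy old_lt].
  set j := index x I.
  have jI : j < size I by rewrite index_mem.
  have xj : nth a I j = x by rewrite nth_index.
  case: j jI xj => [|j] jI xj.
    exists a; first by rewrite mem' mem_cat aP.
    have := pI 0 isT; rewrite /= nthR // xj esym => ->.
    by rewrite (iI _ xI) (iP _ aP) (leq_trans (ltP _ aP)) // leq_addr.
  exists (nth a I j).
    by rewrite mem' mem_nth ?orbT // ltnW.
  have := pI j.+1 (ltnW jI); rewrite /= (nthR j (ltnW jI)) (nthR j.+1 jI) xj esym => ->.
  rewrite (iI _ xI) (iI _ (mem_nth _ (ltnW jI))).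
  rewrite (index_uniq a (ltnW jI) uI) -xj (index_uniq a jI uI).
  by rewrite /= ltn_add2l.
- move=> x; rewrite mem' => /orP[xL|xI] xt.
    have [y yL /andP[exy lt]] := hi x xL xt.
    by exists y; [rewrite mem' yL | rewrite exy old_lt].
  set j := index x I.
  have jI : j < size I by rewrite index_mem.
  have xj : nth a I j = x by rewrite nth_index.
  have := pI j.+1; rewrite ltnS jI /= nthR // xj => /(_ isT) exy.
  case: (ltnP j.+1 (size I)) => jI'.
    exists (nth a I j.+1); first by rewrite mem' mem_nth ?orbT.
    move: exy; rewrite nthR // => ->.
    rewrite (iI _ xI) (iI _ (mem_nth _ jI')).
    by rewrite (index_uniq a jI' uI) /= ltn_add2l.
  have jE : j.+1 = size I by apply/eqP; rewrite eqn_leq jI jI'.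
  exists b; first by rewrite mem' mem_cat bQ orbT.
  move: exy; rewrite jE nth_rcons ltnn eqxx => ->.
  rewrite (iI _ xI) (iQ _ bQ) -addnS.
  exact: leq_add (geQ _ bQ) jI.
Qed.


Lemma exit_edge (P : pred V) x p : path e x p -> P x -> ~~ P (last x p) ->
  exists a z, [/\ P a, ~~ P z & e a z].
Proof.
elim: p x => [|y p IH] x /=; first by move=> _ ->.
case/andP=> exy py Px Pl.
case Py: (P y); first exact: IH Py Pl.
by exists x, y; rewrite Py.
Qed.

Lemma first_hit (P : pred V) (r : rel V) x p : path r x p -> ~~ P x -> P (last x p) ->
  exists q b rest, [/\ P b, (forall y, y \in x :: q -> ~~ P y), path r x (rcons q b)
                   & p = q ++ b :: rest].
Proof.
elim: p x => [|y p IH] x /=; first by move=> _ /negbTE->.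
case/andP=> rxy py nPx Pl.
case Py: (P y).
  exists [::], y, p; split=> //=; last by rewrite rxy.
  by move=> z; rewrite inE => /eqP->.
have [q [b [rest [Pb allq pq ->]]]] := IH y py (negbT Py) Pl.
exists (y :: q), b, rest; split=> //=; last by rewrite rxy.
by move=> z; rewrite inE => /orP[/eqP->//|]; apply: allq.
Qed.

Lemma path_rev_sym a b I : path e a (rcons I b) -> path e b (rcons (rev I) a).
Proof.
move=> p; have := rev_path e a (rcons I b).
rewrite last_rcons belast_rcons rev_cons => ->.
by rewrite (@eq_path _ _ e) // => x y /=; rewrite esym.
Qed.

Lemma sub_lt m a b : a < b -> b <= m -> m - b < m - a.
Proof. lia. Qed.

Hypothesis eirr : irreflexive e.
Hypothesis Hconn : forall u v, connect e u v.
Hypothesis H2 : forall x u v, u != x -> v != x -> connect (del_vertex e x) u v.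

Lemma ear L s t : goodL L s t -> s != t -> (exists z, z \notin L) ->
  exists a b I, [/\ a \in L, b \in L, a != b, uniq I &
     (forall x, x \in I -> x \notin L) /\ path e a (rcons I b) /\ 0 < size I].
Proof.
move=> [uL sL tL _ _] st [z zL].
have /connectP[p pp pl] := Hconn s z.
have zL' : ~~ (mem L) (last s p) by rewrite -pl.
have [a [z' [aL z'L eaz]]] := exit_edge (P := mem L) pp sL zL'.
set b0 := if a == s then t else s.
have b0L : b0 \in L by rewrite /b0; case: ifP.
have b0a : b0 != a.
  rewrite /b0; case: ifP => [/eqP->|/negbT]; first by rewrite eq_sym.
  by rewrite eq_sym.
have z'a : z' != a by apply/negP => /eqP Ez; rewrite Ez aL in z'L.
have /connectP[p2 pp2 pl2] := H2 z'a b0a.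
have [p3 pp3 [up3 l3]] : exists2 p3, path (del_vertex e a) z' p3 &
     uniq (z' :: p3) /\ last z' p3 \in L.
  rewrite pl2 in b0L; case: (shortenP pp2) b0L => p3 pp3 up3 _ H.
  by exists p3.
have [q [b [rest [bL allq pq Ep3]]]] := first_hit (P := mem L) pp3 z'L l3.
exists a, b, (z' :: q); split=> //.
- move: pq; rewrite rcons_path => /andP[_] /=.
  by rewrite eq_sym => /and3P[].
- by move: up3; rewrite Ep3 -cat_cons cat_uniq => /andP[].
split; first by move=> x /allq.
split=> //.
rewrite rcons_cons /= eaz /=.
apply: sub_path pq => x y /=; by case/andP.
Qed.

Lemma stnum s t : e s t -> exists L, goodL L s t /\ forall x, x \in L.
Proof.
move=> est.
have st : s != t by apply/negP=> /eqP E; rewrite E eirr in est.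
have ts : (t == s) = false by apply/negbTE; rewrite eq_sym.
have g0 : goodL [:: s; t] s t.
  split.
  - by rewrite /= inE st.
  - by rewrite inE eqxx.
  - by rewrite !inE eqxx orbT.
  - move=> x; rewrite !inE => /orP[/eqP->|/eqP->]; first by rewrite eqxx.
    move=> _; exists s; first by rewrite inE eqxx.
    by rewrite esym est /index /= eqxx (negbTE st).
  - move=> x; rewrite !inE => /orP[/eqP->|/eqP->]; last by rewrite eqxx.
    move=> _; exists t; first by rewrite !inE eqxx orbT.
    by rewrite est /index /= eqxx (negbTE st).
suff: forall n L, #|V| - size L = n -> goodL L s t ->
    exists L', goodL L' s t /\ forall x, x \in L'.
  by move/(_ _ [:: s; t] erefl g0).
elim/ltn_ind => n IH L HL gL.
case: (pickP (fun x => x \notin L)) => [z zL | allL]; last first.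
  by exists L; split=> // x; have := allL x; rewrite /= => /negbFE.
have [a [b [I [aL bL ab uI [nIL [pI Ine0]]]]]] := ear gL st (ex_intro _ z zL).
have grow : forall P Q I', L = P ++ Q -> uniq I' -> size I' = size I ->
      (forall x, x \in I' -> x \notin L) ->
      goodL (P ++ I' ++ Q) s t -> exists L', goodL L' s t /\ forall x, x \in L'.
  move=> P Q I' LE uI' sI' nI' g'.
  have [uL' _ _ _ _] := g'.
  have szL' : size (P ++ I' ++ Q) = size L + size I'.
    by rewrite LE !size_cat addnA addnAC.
  have Ine : 0 < size I' by rewrite sI'.
  apply: (IH (#|V| - size (P ++ I' ++ Q))) => //.
  rewrite -HL; apply: sub_lt; first by rewrite szL' -addn1 leq_add2l.
  by rewrite -(card_uniqP uL') max_card.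
case: (ltngtP (index a L) (index b L)) => [lt|gt|eq].
- set P := take (index a L).+1 L; set Q := drop (index a L).+1 L.
  have LE : L = P ++ Q by rewrite cat_take_drop.
  have aP : a \in P by rewrite /P in_take // ltnSn.
  have bQ : b \in Q.
    move: (bL); rewrite {1}LE mem_cat /P (in_take _ bL) ltnS leqNgt lt //.
  apply: (grow P Q I) => //.
  apply: (insert_good (a := a) (b := b)) => //; first by rewrite -LE.
  by rewrite -LE.
- set P := take (index b L).+1 L; set Q := drop (index b L).+1 L.
  have LE : L = P ++ Q by rewrite cat_take_drop.
  have bP : b \in P by rewrite /P in_take // ltnSn.
  have aQ : a \in Q.
    move: (aL); rewrite {1}LE mem_cat /P (in_take _ aL) ltnS leqNgt gt //.
  apply: (grow P Q (rev I)) => //; first by rewrite rev_uniq.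
  + by rewrite size_rev.
  + by move=> x; rewrite mem_rev; apply: nIL.
  apply: (insert_good (a := b) (b := a)) => //; first by rewrite -LE.
  + by rewrite rev_uniq.
  + by move=> x; rewrite mem_rev -LE; apply: nIL.
  exact: path_rev_sym.
- by move: ab; rewrite -(nth_index a aL) eq (nth_index a bL) eqxx.
Qed.

End StNum.

Section Code.
Variable n : nat.
Record cword := CW { cX : nat -> nat; cXL : nat; cA : nat -> nat }.

Definition ent (c : nat) (w : cword) i := (cX w i + c * cA w i)%N.
Definition entl (c : nat) (w : cword) := (cXL w + c * \sum_(i < n) (cA w i) ^ 2)%N.
Definition Rel c w w' := (forall i, (i < n)%N -> ent c w i = ent c w' i) /\ entl c w = entl c w'.

Variable w0 : cword.
Local Open Scope ring_scope.

Definition QA (w : cword) : int := \sum_(i < n) (cA w i)%:Z ^+ 2.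

Lemma sumZ w : Posz (\sum_(i < n) cA w i ^ 2)%N = QA w.
Proof.
apply: (big_ind2 (fun (a : nat) (b : int) => Posz a = b)) => //.
  by move=> a1 b1 a2 b2 E1 E2; rewrite PoszD E1 E2.
Qed.

Definition E (c : nat) (w : cword) : int :=
  (cXL w)%:Z + c%:Z * QA w - (cXL w0)%:Z
  - 2 * \sum_(i < n) (cA w0 i)%:Z * ((cX w i)%:Z + c%:Z * (cA w i)%:Z - (cX w0 i)%:Z)
  + c%:Z * QA w0.
Definition D (w : cword) : int := \sum_(i < n) ((cA w i)%:Z - (cA w0 i)%:Z) ^+ 2.

Definition F (c : nat) (w : cword) (i : 'I_n) : int :=
  c%:Z * (cA w i)%:Z ^+ 2
  + - (2 * ((cA w0 i)%:Z * ((cX w i)%:Z + c%:Z * (cA w i)%:Z - (cX w0 i)%:Z)))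
  + c%:Z * (cA w0 i)%:Z ^+ 2.

Lemma Ekey c w : E c w = (cXL w)%:Z - (cXL w0)%:Z + \sum_(i < n) F c w i.
Proof.
rewrite /E /F /QA !big_split /= -!mulr_sumr sumrN -mulr_sumr; ring.
Qed.

Lemma D_ge0 w : 0 <= D w.
Proof. by apply: sumr_ge0 => i _; apply: sqr_ge0. Qed.

Lemma Eshift c w : E c w = E 0 w + c%:Z * D w.
Proof.
rewrite !Ekey /D.
have -> : \sum_(i < n) F c w i = \sum_(i < n) F 0 w i + c%:Z * \sum_(i < n) ((cA w i)%:Z - (cA w0 i)%:Z) ^+ 2.
  rewrite mulr_sumr -big_split /=; apply: eq_bigr => i _; rewrite /F; ring.
ring.
Qed.


Lemma Erel c w w' : Rel c w w' -> E c w = E c w'.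
Proof.
move=> [Hi Hl].
have h1 : (cXL w)%:Z + c%:Z * QA w = (cXL w')%:Z + c%:Z * QA w'.
  by move: Hl; rewrite /entl -!sumZ -!PoszM -!PoszD => ->.
have h2 : \sum_(i < n) (cA w0 i)%:Z * ((cX w i)%:Z + c%:Z * (cA w i)%:Z - (cX w0 i)%:Z)
        = \sum_(i < n) (cA w0 i)%:Z * ((cX w' i)%:Z + c%:Z * (cA w' i)%:Z - (cX w0 i)%:Z).
  apply: eq_bigr => i _; have := Hi i (ltn_ord i); rewrite /ent => h.
  by rewrite -!PoszM -!PoszD h.
by rewrite /E h1 h2.
Qed.

Lemma Eroot c : E c w0 = 0.
Proof.
rewrite Eshift /E /D.
have -> : \sum_(i < n) (cA w0 i)%:Z * ((cX w0 i)%:Z + (0%N)%:Z * (cA w0 i)%:Z - (cX w0 i)%:Z) = 0.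
  by rewrite big1 // => i _; rewrite mul0r addr0 subrr mulr0.
have -> : \sum_(i < n) ((cA w0 i)%:Z - (cA w0 i)%:Z) ^+ 2 = 0.
  by rewrite big1 // => i _; rewrite subrr expr0n.
ring.
Qed.

Lemma Emono c c' w : (c <= c')%N -> E c w <= E c' w.
Proof.
move=> h; rewrite (Eshift c) (Eshift c') lerD2l.
by apply: (ler_wpM2r (D_ge0 w)); rewrite lez_nat.
Qed.

Lemma D0 w : D w = 0 -> forall i, (i < n)%N -> cA w i = cA w0 i.
Proof.
move=> /eqP; rewrite /D psumr_eq0; last by move=> i _; apply: sqr_ge0.
move=> /allP H i lin.
have := H (Ordinal lin) (mem_index_enum _); rewrite /= sqrf_eq0 subr_eq0.
by move/eqP => [].
Qed.

End Code.

Definition same n (w w' : cword) :=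
  (forall i, (i < n)%N -> cX w i = cX w' i /\ cA w i = cA w' i) /\ cXL w = cXL w'.

Section Determine.
Variables (V : finType) (e : rel V) (S : {set V}) (n : nat) (cw : V -> cword)
          (pi : V -> nat) (s t : V) (B : nat).
Hypothesis esym : symmetric e.
Hypothesis Hacc : forall v u, e v u -> u \in S -> Rel n (pi u) (cw v) (cw u).
Hypothesis Hcover : forall u v, e u v -> (u \in S) || (v \in S).
Hypothesis Htdom : forall v, exists2 u, u \in S & e v u.
Hypothesis Hlow : forall p, p != s -> exists2 q, e p q & (pi q < pi p)%N.
Hypothesis Hhigh : forall p, p != t -> exists2 q, e p q & (pi p < pi q)%N.
Hypothesis HB : forall p, (pi p < B)%N.
Hypothesis Hinj : forall p q, e p q -> pi p != pi q.
Hypothesis est : e s t.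
Hypothesis tS : t \in S.
Hypothesis Hconn : forall u v, connect e u v.

Let w0 := cw s.
Local Open Scope ring_scope.
Local Notation E := (E n w0).

Lemma Rel_sym c w w' : Rel n c w w' -> Rel n c w' w.
Proof. by move=> [H1 H2]; split=> // i /H1. Qed.

Lemma edge_color p q : e p q ->
  exists c, [/\ Rel n c (cw p) (cw q), (minn (pi p) (pi q) <= c)%N & (c <= maxn (pi p) (pi q))%N].
Proof.
move=> epq; case qS: (q \in S).
  exists (pi q); split; [exact: Hacc| exact: geq_minr | exact: leq_maxr].
have pS : p \in S by move: (Hcover epq); rewrite qS orbF.
exists (pi p); split; [apply: Rel_sym; apply: Hacc => //; by rewrite esym | exact: geq_minl | exact: leq_maxl].
Qed.

Lemma Up p : 0 <= E (pi p) (cw p).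
Proof.
move: {2}(pi p) (erefl (pi p)) => m; elim/ltn_ind: m p => m IH p Hm.
case: (eqVneq p s) => [->|ps]; first by rewrite /w0 (@Eroot n (cw s)).
have [q epq lt] := Hlow ps.
have [c [R c1 c2]] := edge_color epq.
have h1 : (pi q <= c)%N by move: c1; rewrite (minn_idPr (ltnW lt)).
have h2 : (c <= pi p)%N by move: c2; rewrite (maxn_idPl (ltnW lt)).
apply: (le_trans _ (@Emono n w0 _ _ (cw p) h2)); rewrite (@Erel n w0 _ _ _ R).
apply: (le_trans _ (@Emono n w0 _ _ (cw q) h1)); apply: (IH (pi q)) => //; by rewrite -Hm.
Qed.

Lemma Down p : E (pi p) (cw p) <= 0.
Proof.
move: {2}(B - pi p)%N (erefl (B - pi p)%N) => m; elim/ltn_ind: m p => m IH p Hm.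
case: (eqVneq p t) => [->|pt].
  have R := Hacc est tS.
  by rewrite (@Erel n w0 _ _ _ (Rel_sym R)) /w0 (@Eroot n (cw s)).
have [q epq lt] := Hhigh pt.
have [c [R c1 c2]] := edge_color epq.
have h1 : (pi p <= c)%N by move: c1; rewrite (minn_idPl (ltnW lt)).
have h2 : (c <= pi q)%N by move: c2; rewrite (maxn_idPr (ltnW lt)).
apply: (le_trans (@Emono n w0 _ _ (cw p) h1)); rewrite (@Erel n w0 _ _ _ R).
apply: (le_trans (@Emono n w0 _ _ (cw q) h2)); apply: (IH (B - pi q)%N) => //.
rewrite -Hm; have := HB q; move: lt; clear; lia.
Qed.

Lemma Dzero p : D n w0 (cw p) = 0.
Proof.
have E0 : E (pi p) (cw p) = 0 by apply/eqP; rewrite eq_le Down Up.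
have [u uS epu] := Htdom p.
have R := Hacc epu uS.
have E1 : E (pi u) (cw p) = 0.
  rewrite (@Erel n w0 _ _ _ R); apply/eqP; rewrite eq_le Down Up //.
move: (@Eshift n w0 (pi u) (cw p)) (@Eshift n w0 (pi p) (cw p)); rewrite E1 E0 => h1 h2.
have : ((pi u)%:Z - (pi p)%:Z) * D n w0 (cw p) = 0.
  rewrite mulrBl; apply/eqP; rewrite subr_eq0; apply/eqP.
  by apply: (addrI (E 0 (cw p))); rewrite -h1 -h2.
move/eqP; rewrite mulf_eq0 => /orP[|/eqP//].
by rewrite subr_eq0 => /eqP [] /eqP; rewrite eq_sym (negbTE (Hinj epu)).
Qed.

Lemma same_edge p q : e p q -> same n (cw p) (cw q).
Proof.
move=> epq; have [c [[Hi Hl] _ _]] := edge_color epq.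
have Ap := D0 (Dzero p); have Aq := D0 (Dzero q).
have Aeq i : (i < n)%N -> cA (cw p) i = cA (cw q) i by move=> lin; rewrite Ap // Aq.
split.
  move=> i lin; split; last exact: Aeq.
  by have := Hi i lin; rewrite /ent (Aeq i lin) => /addIn.
move: Hl; rewrite /entl.
have -> : (\sum_(i < n) cA (cw p) i ^ 2 = \sum_(i < n) cA (cw q) i ^ 2)%N.
  by apply: eq_bigr => i _; rewrite (Aeq i (ltn_ord i)).
by move/addIn.
Qed.

Lemma all_same v : same n (cw s) (cw v).
Proof.
have /connectP[p pp ->] := Hconn s v.
elim: p s pp => [|y p IH] x /=; first by split.
case/andP=> exy py.
have [H1 H2] := same_edge exy; have [H3 H4] := IH y py.
split; last by rewrite H2.
move=> i lin; have [a b] := H1 i lin; have [c d] := H3 i lin; split; congruence.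
Qed.

End Determine.

Section Msg.
Variables (n j B : nat).
Definition w1 := j + B.
Definition w2 := j.*2 + n + B.
Definition ell := n * w1 + w2.
Definition mes (c : nat) (w : cword) : seq bool :=
  flatten [seq enc w1 (ent c w i) | i <- iota 0 n] ++ enc w2 (entl n c w).

Lemma size_flat (g : nat -> nat) w m a :
  size (flatten [seq enc w (g i) | i <- iota a m]) = m * w.
Proof.
elim: m a => [|m IH] a //=.
by rewrite size_cat size_enc IH mulSn.
Qed.

Lemma size_mes c w : size (mes c w) = ell.
Proof. by rewrite /mes size_cat size_flat size_enc. Qed.

Lemma flat_inj (g h : nat -> nat) w m a :
  flatten [seq enc w (g i) | i <- iota a m] = flatten [seq enc w (h i) | i <- iota a m] ->
  forall i, a <= i < a + m -> enc w (g i) = enc w (h i).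
Proof.
elim: m a => [|m IH] a /=; first by move=> _ i; rewrite addn0; case/andP=> h1 h2; move: (leq_trans h2 h1); rewrite ltnn.
move/eqP; rewrite eqseq_cat ?size_enc // => /andP[/eqP E1 /eqP E2] i /andP[h1 h2].
case: (eqVneq i a) => [->//|ia].
apply: (IH a.+1 E2); rewrite addSnnS h2 andbT ltn_neqAle eq_sym ia h1.
by [].
Qed.

Lemma mes_inj c w w' :
  (forall i, i < n -> ent c w i < 2 ^ w1) -> (forall i, i < n -> ent c w' i < 2 ^ w1) ->
  entl n c w < 2 ^ w2 -> entl n c w' < 2 ^ w2 ->
  mes c w = mes c w' -> Rel n c w w'.
Proof.
move=> b1 b1' b2 b2' /eqP; rewrite /mes eqseq_cat ?size_flat // => /andP[/eqP E1 /eqP E2].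
split; last exact: enc_inj E2.
move=> i lin; apply: enc_inj (b1 _ lin) (b1' _ lin) _.
by apply: (flat_inj E1); rewrite add0n lin.
Qed.

Lemma ent_bound c w i : c < B -> cX w i < 2 ^ j -> cA w i < 2 ^ j -> ent c w i < 2 ^ w1.
Proof.
move=> cB hX hA; rewrite /ent /w1 expnD.
have hB : B <= 2 ^ B by apply: ltnW; apply: ltn_expl.
set d := 2 ^ j in hX hA *. set e := 2 ^ B in hB *. clearbody d e.
have h1 : c * cA w i <= c * d by rewrite leq_mul2l ltnW // orbT.
nia.
Qed.

Lemma entl_bound c w : 0 < n -> c < B -> cXL w < 2 ^ j ->
  (forall i, i < n -> cA w i < 2 ^ j) -> entl n c w < 2 ^ w2.
Proof.
move=> n0 cB hX hA; rewrite /entl /w2 !expnD -addnn expnD.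
have hB : B <= 2 ^ B by apply: ltnW; apply: ltn_expl.
have hN : n <= 2 ^ n by apply: ltnW; apply: ltn_expl.
have hs : \sum_(i < n) cA w i ^ 2 <= n * (2 ^ j * 2 ^ j).
  have -> : n * (2 ^ j * 2 ^ j) = \sum_(i < n) (2 ^ j * 2 ^ j) by rewrite sum_nat_const card_ord.
  apply: leq_sum => i _; have := hA i (ltn_ord i); move: (2 ^ j) => d h.
  by rewrite -mulnn leq_mul // ltnW.
set Q := \sum_(i < n) cA w i ^ 2 in hs *.
set d := 2 ^ j in hs hX *. set e := 2 ^ B in hB *. set f := 2 ^ n in hN *.
clearbody Q d e f. clear hA.
have h1 : c * Q <= c * (n * (d * d)) by rewrite leq_mul2l hs orbT.
have hd : 0 < d := leq_ltn_trans (leq0n _) hX.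
have h2 : 1 + c * n <= B * n by nia.
have h3 : B * n <= e * f by apply: leq_mul.
have h4 : d <= d * d by rewrite leq_pmulr.
have h5 : cXL w + c * Q < (1 + c * n) * (d * d) by nia.
have h6 : (1 + c * n) * (d * d) <= (e * f) * (d * d) by rewrite leq_mul2r (leq_trans h2 h3) orbT.
apply: (leq_trans h5); apply: (leq_trans h6).
by rewrite mulnC (mulnC e) mulnA.

Qed.

End Msg.

Section Chunk.
Variables (k n j : nat).
Definition chunk (x : k.-tuple bool) (i : nat) : j.-tuple bool :=
  [tuple nth false x (i * j + p) | p < j].
Definition cv (x : k.-tuple bool) i : nat := enum_rank (chunk x i).

Lemma cv_bound x i : cv x i < 2 ^ j.
Proof.
rewrite /cv; apply: (leq_trans (ltn_ord _)).
by rewrite card_tuple card_bool.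
Qed.

Definition cwx x := CW (cv x) (cv x n) (fun i => cv x (n.+1 + i)).

Lemma cwx_inj x y : 0 < j -> k <= (n.*2.+1) * j -> same n (cwx x) (cwx y) -> x = y.
Proof.
move=> j0 kle [H1 H2].
have Hc : forall i, i < n.*2.+1 -> cv x i = cv y i.
  move=> i li; case: (ltnP i n) => [lin|]; first by case: (H1 i lin).
  rewrite leq_eqVlt => /orP[/eqP<-|gt]; first exact H2.
  have : i - n.+1 < n by move: li gt; clear; lia.
  by move/H1=> [_]; rewrite /= subnKC.
have Hch i : i < n.*2.+1 -> chunk x i = chunk y i.
  by move/Hc; rewrite /cv => /val_inj/enum_rank_inj.
apply: eq_from_tnth => p.
have pk := ltn_ord p.
have qlt : p %/ j < n.*2.+1 by rewrite ltn_divLR // (leq_trans pk).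
have rlt : p %% j < j by rewrite ltn_mod.
have := congr1 (fun t => tnth t (Ordinal rlt)) (Hch _ qlt); rewrite !tnth_mktuple /=.
by rewrite -divn_eq !(tnth_nth false).
Qed.

End Chunk.

Definition nnk k := (Nat.sqrt k).+1.
Definition jjk k := (k %/ (nnk k).*2).+1.

Lemma kn k : k < nnk k * nnk k.
Proof. have [_ h] := Nat.sqrt_spec k (le_0_n k); rewrite /nnk; apply/ssrnat.ltP; exact h. Qed.

Lemma kcov k : k < (nnk k).*2 * jjk k.
Proof. by rewrite /jjk mulnC ltn_ceil // double_gt0. Qed.

Lemma ktrunc k : (nnk k).*2 * (k %/ (nnk k).*2) <= k.
Proof. by rewrite mulnC leq_trunc_div. Qed.

Lemma jn k : jjk k <= nnk k.
Proof.
rewrite /jjk ltn_divLR ?double_gt0 //.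
have := kn k; move: (nnk k) => n h; nia.
Qed.

Lemma ell_lo k B : k <= 2 * ell (nnk k) (jjk k) B.
Proof.
have := kcov k; rewrite /ell /w1 /w2; move: (nnk k) (jjk k) => n j h; nia.
Qed.

Lemma ell_hi k B : 2 * ell (nnk k) (jjk k) B <= k + 2 * ((2 * B + 4) * nnk k).
Proof.
have := ktrunc k; have := jn k; rewrite /ell /w1 /w2 /jjk.
have : 0 < nnk k by [].
move: (nnk k) (k %/ (nnk k).*2) => n q h0 h1 h2; nia.
Qed.

Section SmallO.
Local Open Scope ring_scope.

Lemma small_o (C : nat) (eps : rat) : 0 < eps ->
  exists N, forall k, (N <= k)%N -> (C * nnk k)%:R <= eps * k%:R.
Proof.
move=> ep.
set M := (Num.Def.archi_bound ((2 * C)%:R / eps)).+1.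
have hM : (2 * C)%:R <= eps * M%:R.
  have h0 : 0 <= (2 * C)%:R / eps :> rat by apply: divr_ge0 => //; apply: ltW.
  have := archi_boundP h0; rewrite ltr_pdivrMr // => h.
  apply: (le_trans (ltW h)); rewrite mulrC ler_pM2l //.
  by rewrite ler_nat.
exists (M * M)%N => k hk.
set m := Nat.sqrt k.
have mM : (M <= m)%N.
  rewrite /m -[M](Nat.sqrt_square M); apply/ssrnat.leP; apply: Nat.sqrt_le_mono; apply/ssrnat.leP; exact hk.
have mk : (m * m <= k)%N.
  have [h _] := Nat.sqrt_spec k (le_0_n k); apply/ssrnat.leP; exact h.
have m1 : (1 <= m)%N by apply: leq_trans mM.
have e1 : (C * nnk k <= 2 * C * m)%N by rewrite /nnk -/m; nia.
apply: (le_trans (y := (2 * C * m)%:R)); first by rewrite ler_nat.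
rewrite natrM.
apply: (le_trans (y := eps * M%:R * m%:R)); first by rewrite ler_pM2r ?ltr0n.
apply: (le_trans (y := eps * (m * m)%:R)).
  by rewrite natrM mulrA ler_pM2r ?ltr0n // ler_pM2l // ler_nat.
by rewrite ler_pM2l // ler_nat.
Qed.

End SmallO.

Lemma fix_len_id m s : size s = m -> fix_len m s = s.
Proof. by move=> <-; rewrite /fix_len take_size subnn cats0. Qed.

Section Prot.
Variables (V : finType) (e : rel V) (S : {set V}) (pi : V -> nat) (B : nat) (s t : V).
Hypothesis esym : symmetric e.
Hypothesis Hcover : forall u v, e u v -> (u \in S) || (v \in S).
Hypothesis Htdom : forall v, exists2 u, u \in S & e v u.
Hypothesis Hlow : forall p, p != s -> exists2 q, e p q & (pi q < pi p)%N.
Hypothesis Hhigh : forall p, p != t -> exists2 q, e p q & (pi p < pi q)%N.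
Hypothesis HB : forall p, (pi p < B)%N.
Hypothesis Hinj : forall p q, e p q -> pi p != pi q.
Hypothesis est : e s t.
Hypothesis tS : t \in S.
Hypothesis Hconn : forall u v, connect e u v.

Variable k : nat.
Let n := nnk k.
Let j := jjk k.
Definition msgf (v : V) (x : k.-tuple bool) := mes n j B (pi v) (cwx n j x).

Definition prot : protocol V k :=
  @Protocol V k 1 (fun t v => if (t == 0) && (v \in S) then ell n j B else 0)
    (fun t v x h => msgf v x)
    (fun v x h => [forall u, (e v u && (u \in S)) ==> (h 0 u == msgf u x)]).

Lemma run1 lam u : run e prot lam 1 0 u = if u \in S then msgf u (lam u) else [::].
Proof.
have -> : run e prot lam 1 0 u = fix_len (if u \in S then ell n j B else 0) (msgf u (lam u)) by [].
case: (u \in S); first by rewrite fix_len_id // size_mes.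
by rewrite /fix_len take0 sub0n.
Qed.

Lemma acceptsE lam v : accepts e prot lam v =
  [forall u, (e v u && (u \in S)) ==> (view e v (run e prot lam 1) 0 u == msgf u (lam v))].
Proof. by []. Qed.

Lemma prot_solves : solves e prot.
Proof.
move=> lam; split.
  move=> Heq v; rewrite acceptsE; apply/forallP => u; apply/implyP => /andP[evu uS].
  by rewrite /view evu run1 uS (Heq u v) eqxx.
move=> [u0 [v0 neq]].
case: (boolP [forall v, accepts e prot lam v]) => [/forallP all|]; last first.
  by move/forallPn => [v Hv]; exists v.
exfalso; apply: neq.
have Hm : forall v u, e v u -> u \in S -> msgf u (lam u) = msgf u (lam v).
  move=> v u evu uS; have := all v; rewrite acceptsE => /forallP /(_ u).
  by rewrite evu uS /view evu run1 uS /= => /eqP.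
have n0 : (0 < n)%N by [].
have j0 : (0 < j)%N by [].
have Hacc : forall v u, e v u -> u \in S -> Rel n (pi u) (cwx n j (lam v)) (cwx n j (lam u)).
  move=> v u evu uS; apply: (@mes_inj n j B); last by have := Hm v u evu uS; rewrite /msgf => ->.
  - by move=> i _; apply: ent_bound; rewrite ?HB ?cv_bound.
  - by move=> i _; apply: ent_bound; rewrite ?HB ?cv_bound.
  - by apply: entl_bound; rewrite ?HB ?cv_bound // => i _; rewrite cv_bound.
  - by apply: entl_bound; rewrite ?HB ?cv_bound // => i _; rewrite cv_bound.
have Hsame := @all_same V e S n (fun v => cwx n j (lam v)) pi s t B esym Hacc Hcover Htdom
   Hlow Hhigh HB Hinj est tS Hconn.
have kle : (k <= (n.*2.+1) * j)%N.
  by apply: ltnW; apply: (leq_trans (kcov k)); rewrite leq_mul2r leqnSn orbT.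
have E1 := cwx_inj j0 kle (Hsame u0); have E2 := cwx_inj j0 kle (Hsame v0).
by rewrite -E1 -E2.
Qed.

Lemma prot_senders : senders_in prot S.
Proof. by move=> t' v _ /negbTE vS /=; rewrite vS andbF. Qed.

Lemma prot_cost : cost prot = (#|S| * ell n j B)%N.
Proof.
rewrite /cost /= big_ord1 /=.
by rewrite -big_mkcond /= sum_nat_const.
Qed.

End Prot.
Unset Implicit Arguments.
Local Open Scope ring_scope.

Theorem theorem1p3 (V : finType) (e : rel V) :
  simple_graph e -> two_connected e ->
  forall S : {set V}, min_tvc e S ->
    (exists f : nat -> rat,
        (forall eps : rat, 0 < eps ->
           exists N : nat, forall k : nat, (N <= k)%N -> `|f k| <= eps * k%:R) /\
        (forall k : nat, (0 < k)%N ->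
           exists P : protocol V k,
             [/\ solves e P, senders_in P S &
                 (cost P)%:R <= (k%:R / 2 + f k) * #|S|%:R])) /\
    (forall eps : rat, 0 < eps ->
       exists N : nat, forall k : nat, (N <= k)%N ->
         exists P : protocol V k,
           solves e P /\ (cost P)%:R <= (#|S|%:R / 2 + eps) * k%:R).
Proof.
move=> [esym eirr] [V2 Hconn H2] S [[Hcov Htdom] _].
have [v0 _] : exists v0 : V, true.
  case: (pickP (@predT V)) => [v _|h]; first by exists v.
  by move: V2; rewrite (eq_card0 h).
have [t tS est] := Htdom v0.
have [L [[uL _ _ lo hi] allL]] := stnum esym eirr Hconn H2 est.
set pi := fun v => index v L.
set B := size L.
have Hlow : forall p, p != v0 -> exists2 q, e p q & (pi q < pi p)%N.
  move=> p ps; have [q _ /andP[h1 h2]] := lo p (allL p) ps; by exists q.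
have Hhigh : forall p, p != t -> exists2 q, e p q & (pi p < pi q)%N.
  move=> p pt; have [q _ /andP[h1 h2]] := hi p (allL p) pt; by exists q.
have HB : forall p, (pi p < B)%N by move=> p; rewrite /pi /B index_mem.
have Hinj : forall p q, e p q -> pi p != pi q.
  move=> p q epq; apply/negP => /eqP E.
  have : p = q by rewrite -(nth_index p (allL p)) -/(pi p) E /pi nth_index.
  by move=> Epq; move: epq; rewrite Epq eirr.
have Hprot : forall k, (0 < k)%N -> exists P : protocol V k,
    [/\ solves e P, senders_in P S & cost P = (#|S| * ell (nnk k) (jjk k) B)%N].
  move=> k _; exists (prot e S pi B k); split.
  - exact: (prot_solves esym Hcov Htdom Hlow Hhigh HB Hinj est tS Hconn).
  - exact: prot_senders.
  - exact: prot_cost.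
set f := fun k => (ell (nnk k) (jjk k) B)%:R - k%:R / 2 : rat.
have Hf : forall eps : rat, 0 < eps ->
    exists N : nat, forall k : nat, (N <= k)%N -> `|f k| <= eps * k%:R.
  move=> eps ep; have [N HN] := small_o (2 * B + 4) ep.
  exists N => k kN; have := HN k kN.
  have lo' : (k%:R : rat) <= 2 * (ell (nnk k) (jjk k) B)%:R.
    by rewrite -natrM ler_nat ell_lo.
  have hi' : 2 * (ell (nnk k) (jjk k) B)%:R <= k%:R + 2 * ((2 * B + 4) * nnk k)%:R :> rat.
    by rewrite -!natrM -natrD ler_nat ell_hi.
  rewrite /f ger0_norm; last by lra.
  move: lo' hi'; move: ((ell (nnk k) (jjk k) B)%:R) ((2 * B + 4) * nnk k)%:R (k%:R : rat) => a b c.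
  lra.
split.
  exists f; split => // k k0; have [P [h1 h2 h3]] := Hprot k k0.
  exists P; split => //; rewrite h3 /f natrM.
  have -> : (k%:R / 2 + ((ell (nnk k) (jjk k) B)%:R - k%:R / 2)) = (ell (nnk k) (jjk k) B)%:R :> rat.
    by ring.
  by rewrite mulrC.
move=> eps ep.
have S0 : (0 < #|S|)%N by apply/card_gt0P; exists t.
have ep' : 0 < eps / #|S|%:R by apply: divr_gt0 => //; rewrite ltr0n.
have [N HN] := Hf _ ep'.
exists (maxn N 1) => k kN.
have kN1 : (N <= k)%N by apply: leq_trans kN; apply: leq_maxl.
have k0 : (0 < k)%N by apply: leq_trans kN; apply: leq_maxr.
have [P [h1 h2 h3]] := Hprot k k0.
exists P; split => //; rewrite h3 natrM.
have hf := HN k kN1.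
have hf' : (ell (nnk k) (jjk k) B)%:R - k%:R / 2 <= eps / #|S|%:R * k%:R :> rat.
  by apply: le_trans hf; apply: ler_norm.
have Spos : (0 : rat) < #|S|%:R by rewrite ltr0n.
have : (ell (nnk k) (jjk k) B)%:R <= k%:R / 2 + eps / #|S|%:R * k%:R :> rat by lra.
move=> h.
apply: (le_trans (y := #|S|%:R * (k%:R / 2 + eps / #|S|%:R * k%:R))).
  by rewrite ler_pM2l.
have -> : #|S|%:R * (k%:R / 2 + eps / #|S|%:R * k%:R) = (#|S|%:R / 2 + eps) * k%:R :> rat.
  by field; rewrite gt_eqF.
by [].
Qed.
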